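(* Let $\varrho_0,\varrho\in\mathbb{R}$ with $0<\varrho_0<\varrho$, let $q\in\mathbb{N}$ with $q\ge2$, let $\boldsymbol{a}\subset\mathbb{N}_0\times\mathbb{N}$ be finite and, for $j\in\mathbb{N}$, let $\varnothing\ne\boldsymbol{a}_j\subseteq\boldsymbol{a}$, and suppose $m/n\le\varrho_0$ for all $(m,n)\in\boldsymbol{a}$. Then the relation $\prec$ on $\boldsymbol{a}$ given by $(m,n)\prec(m',n')$ iff either $m-n\varrho>m'-n'\varrho$, or $m-n\varrho=m'-n'\varrho$ and $n<n'$, is a strict linear order on $\boldsymbol{a}$. Let $(m_0,n_0)\in\boldsymbol{a}$ be $\prec$-minimal subject to the set $\{j\in\mathbb{N}\mid(m_0,n_0)\in\boldsymbol{a}_j\}$ being infinite, let $(k_j)_{j\in\mathbb{N}}$ be natural numbers with $|k_j/j-\varrho|\le1/j$ for all $j$, and set $f(j)=n_0k_j-m_0j$ if $j\ge(\varrho-\varrho_0)^{-1}$ and $f(j)=0$ otherwise. Then the Dirichlet series corresponding to the infinite product $\prod_{j\in\mathbb{N}}\bigl(1+\xi_{\boldsymbol{a}_j,q^j}\bigr)^{q^{f(j)}}$ has abscissa of convergence $\varrho$.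
   Context: For a finite set $\boldsymbol{b}\subset\mathbb{N}_0\times\mathbb{N}$ and $Q\in\mathbb{N}_{\ge2}$, $\xi_{\boldsymbol{b},Q}(s)=\sum_{(m,n)\in\boldsymbol{b}}Q^{m-ns}$, a Dirichlet polynomial. The abscissa of convergence of a Dirichlet series $\sum_n c_nn^{-s}$ with non-negative coefficients is the infimum of real $\sigma$ for which it converges at $s=\sigma$. *)

(* Defs.v *)
From HB Require Import structures.
From mathcomp Require Import all_boot all_order all_algebra.
From mathcomp Require Import all_classical all_reals all_analysis.
Set Implicit Arguments. Unset Strict Implicit. Unset Printing Implicit Defensive.
Import Order.TTheory GRing.Theory Num.Theory.
Import numFieldNormedType.Exports.
Local Open Scope ring_scope.

(* A (formal) Dirichlet series sum_{N>=1} c N * N^{-s} is represented by its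
   coefficient function c : nat -> R (the value at 0 is irrelevant). *)

Definition dconv {R : realType} (f g : nat -> R) : nat -> R :=
  fun N => \sum_(d <- divisors N) f d * g (N %/ d)%N.

Definition dunit {R : realType} : nat -> R := fun N => (N == 1%N)%:R.

Definition dpow {R : realType} (f : nat -> R) (e : nat) : nat -> R :=
  iter e (dconv f) dunit.

(* Coefficients of xi_{b,Q}(s) = sum_{(m,n) in b} Q^{m - n s}
   = sum_{(m,n) in b} Q^m (Q^n)^{-s};  b is a duplicate-free list of pairs. *)
Definition xi_coef {R : realType} (b : seq (nat * nat)) (Q : nat) : nat -> R :=
  fun N => \sum_(p <- b | (Q ^ p.2)%N == N) ((Q ^ p.1)%N)%:R.

Definition one_plus_xi {R : realType} (b : seq (nat * nat)) (Q : nat) : nat -> R :=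
  fun N => dunit N + xi_coef b Q N.

Definition dpartial {R : realType} (F : nat -> nat -> R) (J : nat) : nat -> R :=
  \big[dconv/dunit]_(1 <= j < J.+1) F j.

(* Formal infinite product prod_{j >= 1} F j : coefficientwise limit of the
   partial products (these are eventually constant in our application). *)
Definition dinfprod {R : realType} (F : nat -> nat -> R) : nat -> R :=
  fun N => limn (fun J => dpartial F J N).

Definition dconverges {R : realType} (c : nat -> R) (sigma : R) : Prop :=
  cvgn (series (fun n : nat => c n.+1 * ((n.+1)%:R `^ (- sigma)))).

Definition abscissa {R : realType} (c : nat -> R) : \bar R :=
  ereal_inf [set (sigma%:E) | sigma in [set sigma : R | dconverges c sigma]].

Definition prec {R : realType} (rho : R) (x y : nat * nat) : Prop :=
  (x.1%:R - x.2%:R * rho > y.1%:R - y.2%:R * rho) \/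
  (x.1%:R - x.2%:R * rho = y.1%:R - y.2%:R * rho /\ (x.2 < y.2)%N).

(* Main.v *)
Require Import Defs.
From HB Require Import structures.
From mathcomp Require Import all_boot all_order all_algebra.
From mathcomp Require Import all_classical all_reals all_analysis.
From mathcomp Require Import lra.
Import Order.TTheory GRing.Theory Num.Theory.
Import numFieldNormedType.Exports.
Local Open Scope ring_scope.
Local Open Scope classical_set_scope.
Set Implicit Arguments. Unset Strict Implicit.

Section Conv.
Variable R : realType.
Implicit Types g h : nat -> R.

Definition nng g := forall n, 0 <= g n.

Lemma dconv_ge0 g h : nng g -> nng h -> nng (dconv g h).
Proof. by move=> Hg Hh n; rewrite /dconv; apply: sumr_ge0 => d _; apply: mulr_ge0. Qed.

Lemma dunit_ge0 : nng (@dunit R).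
Proof. by move=> n; rewrite /dunit ler0n. Qed.

Lemma dconv1 g h : dconv g h 1 = g 1%N * h 1%N.
Proof. by rewrite /dconv (_ : divisors 1 = [:: 1%N]) // big_seq1 divn1. Qed.

Lemma dconv_ge_term g h N d : nng g -> nng h -> (0 < N)%N -> (d %| N)%N ->
  g d * h (N %/ d)%N <= dconv g h N.
Proof.
move=> Hg Hh N0 dN; rewrite /dconv (bigD1_seq d) /=; last exact: divisors_uniq.
  by rewrite lerDl; apply: sumr_ge0 => i _; apply: mulr_ge0.
by rewrite -dvdn_divisors.
Qed.

Lemma dconv_ge2 g h N : nng g -> nng h -> (1 < N)%N ->
  g 1%N * h N + g N * h 1%N <= dconv g h N.
Proof.
move=> Hg Hh N1; have N0 : (0 < N)%N by apply: ltnW.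
rewrite /dconv (bigD1_seq 1%N) /=; [|exact: divisor1|exact: divisors_uniq].
rewrite divn1 lerD2l -big_filter (bigD1_seq N) /=.
- rewrite divnn N0 lerDl; apply: sumr_ge0 => i _; apply: mulr_ge0 => //.
- by rewrite mem_filter divisors_id // andbT; case: (N) N1 => [|[]].
- by rewrite filter_uniq // divisors_uniq.
Qed.

Lemma dconv_eq_l g h N : (0 < N)%N ->
  (forall e, (0 < e <= N)%N -> h e = dunit e) -> dconv g h N = g N.
Proof.
move=> N0 Hh; rewrite /dconv (bigD1_seq N) /=; [|exact: divisors_id|exact: divisors_uniq].
rewrite divnn N0 /= Hh // /dunit eqxx mulr1 big_seq_cond big1 ?addr0 // => d.
rewrite -dvdn_divisors // => /andP[dN dneq].
have d0 : (0 < d)%N by apply: dvdn_gt0 dN.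
have e0 : (0 < N %/ d)%N by rewrite divn_gt0 // dvdn_leq.
rewrite Hh ?e0 ?leq_div // /dunit.
case: eqP => [H|]; last by rewrite mulr0.
by move: dneq; rewrite -{1}(divnK dN) H mul1n eqxx.
Qed.

Lemma dconv_ext_r g h h' N : (0 < N)%N ->
  (forall e, (0 < e <= N)%N -> h e = h' e) -> dconv g h N = dconv g h' N.
Proof.
move=> N0 H; rewrite /dconv; apply: eq_big_seq => d.
rewrite -dvdn_divisors // => dN.
have d0 : (0 < d)%N by apply: dvdn_gt0 dN.
rewrite H //.
rewrite divn_gt0 // dvdn_leq // leq_div //.
Qed.

Lemma dpowS g Q : dpow g Q.+1 = dconv g (dpow g Q).
Proof. by []. Qed.

Lemma dpow_ge0 g Q : nng g -> nng (dpow g Q).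
Proof. by move=> Hg; elim: Q => [|Q IH]; [exact: dunit_ge0|rewrite dpowS; apply: dconv_ge0]. Qed.

Lemma dpow1 g Q : g 1%N = 1 -> dpow g Q 1%N = 1.
Proof. by move=> H; elim: Q => [|Q IH]; rewrite ?dpowS ?dconv1 ?IH ?H ?mulr1. Qed.

Lemma dpow_ge g Q N : nng g -> g 1%N = 1 -> (1 < N)%N -> Q%:R * g N <= dpow g Q N.
Proof.
move=> Hg H1 N1; elim: Q => [|Q IH]; first by rewrite mul0r; exact: dunit_ge0.
rewrite dpowS; apply: le_trans (dconv_ge2 Hg (dpow_ge0 Q Hg) N1).
rewrite H1 mul1r dpow1 // mulr1 mulrSr mulrDl mul1r; exact: lerD.
Qed.

Lemma dpow_unit g Q L : (forall e, (0 < e < L)%N -> g e = dunit e) ->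
  forall e, (0 < e < L)%N -> dpow g Q e = dunit e.
Proof.
move=> Hg; elim: Q => [|Q IH] e He //.
rewrite dpowS dconv_eq_l ?Hg //; first by case/andP: He.
move=> e' /andP[e0 e'e]; apply: IH; rewrite e0 /=.
by case/andP: He => _; apply: leq_ltn_trans.
Qed.

Variable F : nat -> nat -> R.
Definition BP (s : seq nat) h := \big[dconv/h]_(i <- s) F i.

Lemma bp_ext s h h' L : (forall e, (0 < e < L)%N -> h e = h' e) ->
  forall e, (0 < e < L)%N -> BP s h e = BP s h' e.
Proof.
move=> H; elim: s => [|x s IH] e He; rewrite /BP ?big_nil ?H // !big_cons.
case/andP: He => e0 eL; apply: dconv_ext_r => // e' /andP[e'0 e'e].
by apply: IH; rewrite e'0 (leq_ltn_trans e'e).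
Qed.

Lemma bp_unit s L : (forall i, i \in s -> forall e, (0 < e < L)%N -> F i e = dunit e) ->
  forall e, (0 < e < L)%N -> BP s dunit e = dunit e.
Proof.
elim: s => [|x s IH] H e He; rewrite /BP ?big_nil // big_cons.
case/andP: He => e0 eL; rewrite dconv_eq_l //.
  by apply: H; rewrite ?mem_head ?e0.
move=> e' /andP[e'0 e'e]; apply: IH; last by rewrite e'0 (leq_ltn_trans e'e).
by move=> i iS; apply: H; rewrite in_cons iS orbT.
Qed.

Lemma bp1 s : (forall i, i \in s -> F i 1%N = 1) -> BP s dunit 1%N = 1.
Proof.
elim: s => [|x s IH] H; first by rewrite /BP big_nil.
rewrite /BP big_cons dconv1 -/(BP _ _) IH ?H ?mulr1 ?mem_head //.
by move=> i iS; apply: H; rewrite in_cons iS orbT.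
Qed.

Lemma bp_ge0 s : (forall i, nng (F i)) -> nng (BP s dunit).
Proof.
move=> H; elim: s => [|x s IH]; first by rewrite /BP big_nil; exact: dunit_ge0.
by rewrite /BP big_cons; apply: dconv_ge0.
Qed.

Lemma bp_ge s j N : (forall i, nng (F i)) -> (forall i, i \in s -> F i 1%N = 1) -> (0 < N)%N ->
  j \in s -> F j N <= BP s dunit N.
Proof.
move=> Hn; elim: s => [|x s IH] H1 N0 //; rewrite in_cons /BP big_cons -/(BP _ _).
have H1' : forall i, i \in s -> F i 1%N = 1.
  by move=> i iS; apply: H1; rewrite in_cons iS orbT.
case/orP => [/eqP->|js].
  apply: le_trans (dconv_ge_term (Hn x) (bp_ge0 s Hn) N0 (dvdnn N)).
  by rewrite divnn N0 /= bp1 // mulr1.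
apply: le_trans (dconv_ge_term (Hn x) (bp_ge0 s Hn) N0 (dvd1n N)).
by rewrite H1 ?mem_head // mul1r divn1 IH.
Qed.

End Conv.

Section SMs.
Variables (R : realType) (sig : R).
Implicit Types g h : nat -> R.

Definition w (d : nat) : R := d%:R `^ (- sig).
Definition SM M g := \sum_(d <- iota 1 M) g d * w d.

Lemma w_ge0 d : 0 <= w d. Proof. exact: powR_ge0. Qed.

Lemma w_mul d e : w (d * e) = w d * w e.
Proof. by rewrite /w natrM powRM. Qed.

Lemma w1 : w 1 = 1. Proof. by rewrite /w powR1. Qed.

Lemma sum_pick (s : seq nat) x (Y : nat -> R) : uniq s ->
  \sum_(e <- s) (e == x)%:R * Y e = (x \in s)%:R * Y x.
Proof.
elim: s => [|y s IH]; first by rewrite big_nil in_nil mul0r.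
rewrite /= => /andP[ys us]; rewrite big_cons IH // in_cons.
case: eqP => [<-|/eqP yx]; last by rewrite mul0r add0r eq_sym (negbTE yx).
by rewrite (negbTE ys) mul0r addr0 eqxx.
Qed.

Lemma sum_pick_le (s : seq nat) x (Y : nat -> R) : uniq s -> 0 <= Y x ->
  \sum_(e <- s) (e == x)%:R * Y e <= Y x.
Proof.
move=> us Y0; rewrite sum_pick //; case: (x \in s); rewrite ?mul1r ?mul0r //.
Qed.

Lemma sum_div (N M : nat) (X : nat -> R) : (0 < N <= M)%N ->
  \sum_(d <- divisors N) X d = \sum_(d <- iota 1 M) (d %| N)%:R * X d.
Proof.
case/andP=> N0 NM.
transitivity (\sum_(d <- iota 1 M | (d %| N)%N) X d).
  rewrite -[RHS]big_filter. apply: perm_big; apply: uniq_perm.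
  - exact: divisors_uniq.
  - by rewrite filter_uniq // iota_uniq.
  move=> d; rewrite mem_filter mem_iota -dvdn_divisors //.
  case dN: (d %| N)%N => //=.
  have d0 : (0 < d)%N by apply: dvdn_gt0 dN.
  by rewrite d0 /= add1n ltnS (leq_trans (dvdn_leq N0 dN) NM).
rewrite big_mkcond; apply: eq_bigr => d _.
by case: (d %| N)%N; rewrite ?mul1r ?mul0r.
Qed.

Lemma SM_ge0 g M : nng g -> 0 <= SM M g.
Proof. by move=> H; apply: sumr_ge0 => d _; apply: mulr_ge0 => //; exact: w_ge0. Qed.

Lemma SM_conv g h M : nng g -> nng h -> SM M (dconv g h) <= SM M g * SM M h.
Proof.
move=> Hg Hh.
pose T d e := (g d * w d) * (h e * w e).
have T0 d e : 0 <= T d e by apply: mulr_ge0; apply: mulr_ge0 => //; exact: w_ge0.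
have step1 : forall N, N \in iota 1 M -> dconv g h N * w N <=
    \sum_(d <- iota 1 M) \sum_(e <- iota 1 M) ((N == d * e)%N)%:R * T d e.
  move=> N; rewrite mem_iota add1n ltnS => NM.
  rewrite /dconv (sum_div _ NM) mulr_suml; apply: ler_sum => d _.
  case dN: (d %| N)%N; last first.
    by rewrite mul0r mul0r; apply: sumr_ge0 => e _; apply: mulr_ge0.
  case/andP: NM => N0 NM.
  have d0 : (0 < d)%N by apply: dvdn_gt0 dN.
  have -> : \sum_(e <- iota 1 M) ((N == d * e)%N)%:R * T d e =
            \sum_(e <- iota 1 M) (e == (N %/ d)%N)%:R * T d e.
    apply: eq_bigr => e _.
    by rewrite -{1}(div.divnK dN) mulnC eqn_pmul2l // eq_sym.
  rewrite sum_pick ?iota_uniq // mem_iota add1n ltnS divn_gt0 // dvdn_leq //=.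
  rewrite (leq_trans (leq_div _ _) NM) mul1r /T.
  rewrite -{2}(div.divnK dN) mulnC w_mul mul1r.
  by rewrite mulrACA.
apply: le_trans (_ : _ <= \sum_(N <- iota 1 M) \sum_(d <- iota 1 M)
   \sum_(e <- iota 1 M) ((N == d * e)%N)%:R * T d e) _.
  by rewrite /SM big_seq [X in _ <= X]big_seq; apply: ler_sum => N /step1.
rewrite exchange_big /= /SM big_distrl /=; apply: ler_sum => d _.
rewrite exchange_big /= big_distrr /=; apply: ler_sum => e _.
by have := sum_pick_le (x:=(d * e)%N) (Y:=fun _ => T d e) (iota_uniq 1 M) (T0 d e).
Qed.

Lemma SM_dunit M : SM M dunit <= 1.
Proof.
rewrite /SM /dunit; apply: le_trans (sum_pick_le (x:=1%N) (Y:=w) (iota_uniq 1 M) (w_ge0 _)) _.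
by rewrite w1.
Qed.

Lemma SM_pow g Q M : nng g -> SM M (dpow g Q) <= SM M g ^+ Q.
Proof.
move=> Hg; elim: Q => [|Q IH]; first by rewrite expr0; exact: SM_dunit.
rewrite dpowS exprS; apply: le_trans (SM_conv _ Hg (dpow_ge0 _ Hg)) _.
by apply: ler_wpM2l => //; exact: SM_ge0.
Qed.

Lemma SM_xi b Q M : SM M (xi_coef b Q) <= \sum_(p <- b) (Q ^ p.1)%:R * w (Q ^ p.2).
Proof.
rewrite /SM /xi_coef.
under eq_bigr => d _ do rewrite big_mkcond mulr_suml /=.
rewrite exchange_big /=; apply: ler_sum => p _.
rewrite (eq_bigr (fun d => (d == (Q ^ p.2)%N)%:R * ((Q ^ p.1)%:R * w d))); last first.
  by move=> d _; rewrite eq_sym; case: eqP => _; rewrite ?mul1r ?mul0r.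
apply: sum_pick_le; [exact: iota_uniq | apply: mulr_ge0 => //; exact: w_ge0].
Qed.


Lemma SM_opx b Q M : SM M (one_plus_xi b Q) <= 1 + \sum_(p <- b) (Q ^ p.1)%:R * w (Q ^ p.2).
Proof.
rewrite /SM /one_plus_xi.
under eq_bigr => d _ do rewrite mulrDl.
rewrite big_split /=; apply: lerD; [exact: SM_dunit|exact: SM_xi].
Qed.

Lemma SM_bp F s M : (forall i, nng (F i)) -> SM M (BP F s dunit) <= \prod_(i <- s) SM M (F i).
Proof.
move=> H; elim: s => [|x s IH]; first by rewrite /BP !big_nil; exact: SM_dunit.
rewrite /BP big_cons -/(BP _ _ _) big_cons.
apply: le_trans (SM_conv _ (H x) (bp_ge0 _ H)) _.
by apply: ler_wpM2l => //; exact: SM_ge0.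
Qed.

End SMs.

Section Gen.
Variable R : realType.

Lemma geo_bound (K r : R) (t : nat -> R) : 0 <= K -> 0 < r < 1 ->
  (forall j, (0 < j)%N -> t j <= K * r ^+ j) ->
  forall M, \sum_(j <- iota 1 M) t j <= K / (1 - r).
Proof.
move=> K0 /andP[r0 r1] Ht M.
apply: (@le_trans _ _ (\sum_(j <- iota 0 M.+1) K * r ^+ j)).
  rewrite /= big_cons expr0 mulr1 big_seq [X in _ <= _ + X]big_seq.
  apply: ler_wpDl => //; apply: ler_sum => j; rewrite mem_iota => /andP[j0 _].
  exact: Ht.
have := geometric_le_lim M.+1 K0 r0 (_ : `|r| < 1).
rewrite seriesEnat /= /index_iota subn0.
apply; by rewrite gtr0_norm.
Qed.

Lemma fin_bound (A : set nat) : finite_set A -> exists B, forall j, A j -> (j < B)%N.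
Proof.
move=> /finite_fsetP[X ->]; exists (\max_(i <- finmap.enum_fset X) i).+1 => j /= jX.
rewrite ltnS. by apply: (@leq_bigmax_seq _ _ xpredT id j).
Qed.

Lemma inf_unbounded (A : set nat) : infinite_set A -> forall B, exists j, A j /\ (B <= j)%N.
Proof.
move=> Ainf B; apply: contrapT => H; apply: Ainf.
apply: (@sub_finite_set _ _ `I_B); last exact: finite_II.
move=> j Aj /=; rewrite ltnNge; apply/negP => Bj; apply: H; by exists j.
Qed.

Lemma powRD' (x r s : R) : 0 < x -> x `^ (r + s) = x `^ r * x `^ s.
Proof. by move=> x0; apply: powRD; rewrite (gt_eqF x0) implybT. Qed.

Lemma sum_ge_term (s : seq nat) (t : nat -> R) i : uniq s -> i \in s ->
  (forall j, 0 <= t j) -> t i <= \sum_(j <- s) t j.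
Proof.
move=> us iS t0; rewrite (bigD1_seq i) //= lerDl; exact: sumr_ge0.
Qed.

End Gen.

Section Main.
Variables (R : realType) (rho0 rho : R) (q : nat)
  (a : seq (nat * nat)) (aj : nat -> seq (nat * nat))
  (m0 n0 : nat) (k : nat -> nat).
Hypotheses (Hr0 : 0 < rho0) (Hrr : rho0 < rho) (Hq : (2 <= q)%N)
  (Hauniq : uniq a)
  (Ha2 : forall p, p \in a -> (0 < p.2)%N)
  (Haj : forall j, (0 < j)%N -> uniq (aj j) /\ aj j != [::] /\ {subset aj j <= a})
  (Hrat : forall p, p \in a -> p.1%:R / p.2%:R <= rho0)
  (Hm0 : (m0, n0) \in a)
  (Hinf : infinite_set [set j : nat | (0 < j)%N /\ (m0, n0) \in aj j])
  (Hmin : forall p, p \in a ->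
     infinite_set [set j : nat | (0 < j)%N /\ p \in aj j] ->
     ~ prec rho p (m0, n0))
  (Hk : forall j, (0 < j)%N -> (0 < k j)%N /\
     `| (k j)%:R / j%:R - rho | <= 1 / j%:R).

Definition f := fun j : nat =>
    if (rho - rho0)^-1 <= j%:R then (n0 * k j - m0 * j)%N else 0%N.
Definition G j := @one_plus_xi R (aj j) (q ^ j).
Definition FF j := dpow (G j) (q ^ f j).
Definition c := dinfprod FF.

Lemma q0 : (0 < q)%N. Proof. by apply: leq_trans Hq. Qed.

Lemma G_ge0 j : nng (G j).
Proof.
move=> n; rewrite /G /one_plus_xi; apply: addr_ge0; first exact: dunit_ge0.
by apply: sumr_ge0 => p _; rewrite ler0n.
Qed.

Lemma FF_ge0 j : nng (FF j).
Proof. exact: dpow_ge0 (G_ge0 j). Qed.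

Lemma qpow_ge j n : (0 < n)%N -> (q ^ j <= (q ^ j) ^ n)%N.
Proof.
case: n => // n _; rewrite expnS leq_pmulr // expn_gt0 expn_gt0 q0 //.
Qed.

Lemma G_unit j e : (0 < j)%N -> (0 < e < q ^ j)%N -> G j e = dunit e.
Proof.
move=> j0 /andP[e0 eq]; rewrite /G /one_plus_xi /xi_coef big_seq_cond big1 ?addr0 //.
move=> p /andP[pa /eqP Hp].
have [_ [_ sub]] := Haj j0; have p2 := Ha2 (sub _ pa).
by move: eq; rewrite -Hp ltnNge qpow_ge.
Qed.

Lemma qj_gt1 j : (0 < j)%N -> (1 < q ^ j)%N.
Proof. by move=> j0; rewrite (leq_trans Hq) // -{1}(expn1 q) leq_pexp2l // q0. Qed.

Lemma G1 j : (0 < j)%N -> G j 1%N = 1.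
Proof. by move=> j0; rewrite G_unit // qj_gt1. Qed.

Lemma FF1 j : (0 < j)%N -> FF j 1%N = 1.
Proof. by move=> j0; apply: dpow1; exact: G1. Qed.

Lemma FF_unit j e : (0 < j)%N -> (0 < e < q ^ j)%N -> FF j e = dunit e.
Proof. by move=> j0; apply: dpow_unit => e' He'; apply: G_unit. Qed.

Lemma dpartial_BP J : dpartial FF J = BP FF (iota 1 J) dunit.
Proof. by rewrite /dpartial /BP /index_iota subSS subn0. Qed.

Lemma stab J0 D N : (0 < N < q ^ J0.+1)%N -> dpartial FF (J0 + D) N = dpartial FF J0 N.
Proof.
move=> HN; rewrite !dpartial_BP iotaD /BP big_cat_nested -!/(BP _ _ _).
apply: (@bp_ext R FF _ _ _ (q ^ J0.+1)%N) => // e He.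
apply: (@bp_unit R FF _ (q ^ J0.+1)%N) => // i; rewrite mem_iota => /andP[Hi _] e' /andP[e'0 e'L].
apply: FF_unit; first by apply: leq_trans Hi.
rewrite e'0 (leq_trans e'L) // leq_pexp2l // ?q0 //.
Qed.

Lemma c_eq J0 N : (0 < N < q ^ J0.+1)%N -> c N = dpartial FF J0 N.
Proof.
move=> HN; rewrite /c /dinfprod; apply: cvg_lim => //.
apply: cvg_near_cst; exists J0 => // J /= HJ.
by rewrite -(subnKC HJ) stab.
Qed.

Lemma c_ge0 N : (0 < N)%N -> 0 <= c N.
Proof.
move=> N0; rewrite (@c_eq N N); last by rewrite N0 /= (leq_trans (ltn_expl _ Hq)) // leq_pexp2l ?q0.
by rewrite dpartial_BP; apply: bp_ge0 => i; exact: FF_ge0.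
Qed.

Lemma lb j : (0 < j)%N -> (m0, n0) \in aj j ->
  (q ^ f j)%:R * ((q ^ j) ^ m0)%:R <= c ((q ^ j) ^ n0)%N.
Proof.
move=> j0 jin; set N := ((q ^ j) ^ n0)%N.
have n00 : (0 < n0)%N := Ha2 Hm0.
have N1 : (1 < N)%N by apply: leq_trans (qj_gt1 j0) (qpow_ge _ n00).
have N0 : (0 < N)%N by apply: ltnW.
rewrite (@c_eq N N); last by rewrite N0 /= (leq_trans (ltn_expl _ Hq)) // leq_pexp2l ?q0.
rewrite dpartial_BP.
apply: le_trans (@bp_ge R FF (iota 1 N) j N FF_ge0 _ N0 _).
- apply: le_trans (dpow_ge (q ^ f j) (G_ge0 j) (G1 j0) N1).
  apply: ler_wpM2l => //; rewrite /G /one_plus_xi /xi_coef.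
  rewrite -[X in X <= _]add0r; apply: lerD; first exact: dunit_ge0.
  rewrite (big_rem _ jin) /= eqxx lerDl.
  by apply: sumr_ge0 => p _; rewrite ler0n.
- by move=> i; rewrite mem_iota => /andP[i0 _]; exact: FF1.
- rewrite mem_iota j0 add1n ltnS.
  by apply: leq_trans (ltnW (ltn_expl _ Hq)) (qpow_ge _ n00).
Qed.

Lemma kb j : (0 < j)%N ->
  j%:R * rho - 1 <= (k j)%:R /\ (k j)%:R <= j%:R * rho + 1.
Proof.
move=> j0; have [_ H] := Hk j0.
have J0 : 0 < (j%:R : R) by rewrite ltr0n.
have e : (k j)%:R = j%:R * ((k j)%:R / j%:R) :> R by rewrite mulrC divfK // gt_eqF.
have e1 : j%:R * (1 / j%:R) = 1 :> R by rewrite mul1r mulfV // gt_eqF.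
move: H; rewrite ler_norml => /andP[h1 h2].
have := ler_wpM2l (ltW J0) h2; have := ler_wpM2l (ltW J0) h1.
rewrite mulrN e1 mulrBr -e => H1 H2; split; lra.
Qed.

Lemma rat_le p : p \in a -> p.1%:R <= rho0 * p.2%:R :> R.
Proof.
move=> pa; have := Hrat pa; rewrite ler_pdivrMr ?ltr0n ?Ha2 // mulrC //.
Qed.

Lemma fj_eq j : (0 < j)%N -> (rho - rho0)^-1 <= j%:R ->
  (f j)%:R = n0%:R * (k j)%:R - m0%:R * j%:R :> R.
Proof.
move=> j0 T; rewrite /f T.
have d0 : 0 < rho - rho0 by rewrite subr_gt0.
have J1 : 1 <= j%:R * (rho - rho0).
  have := ler_wpM2l (ltW d0) T; rewrite mulfV ?gt_eqF // mulrC //.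
have [kl ku] := kb j0.
have M0 := rat_le Hm0.
have F1 : 0 <= n0%:R * ((k j)%:R - (j%:R * rho - 1)) :> R by apply: mulr_ge0; rewrite ?ler0n ?subr_ge0.
have F2 : 0 <= n0%:R * (j%:R * (rho - rho0) - 1) :> R by apply: mulr_ge0; rewrite ?ler0n ?subr_ge0.
have F3 : 0 <= j%:R * (rho0 * n0%:R - m0%:R) :> R by apply: mulr_ge0; rewrite ?ler0n ?subr_ge0.
have H : (m0 * j <= n0 * k j)%N.
  rewrite -(ler_nat R) !natrM; nra.
by rewrite natrB // !natrM.
Qed.

Lemma Eup j p sig : (0 < j)%N -> p \in a -> rho < sig ->
  p.1%:R - p.2%:R * rho <= m0%:R - n0%:R * rho ->
  (f j)%:R + (j * p.1)%:R - (j * p.2)%:R * sig <= n0%:R - j%:R * (sig - rho) :> R.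
Proof.
move=> j0 pa rs prc.
have P2 : 1 <= p.2%:R :> R by rewrite ler1n Ha2.
have P1 := rat_le pa.
have J0 : 0 <= (j%:R : R) by rewrite ler0n.
have G3 : 0 <= j%:R * ((p.2%:R - 1) * (sig - rho)) :> R.
  by apply: mulr_ge0 => //; apply: mulr_ge0; rewrite subr_ge0 // ltW.
rewrite !natrM.
case: (boolP ((rho - rho0)^-1 <= j%:R)) => T.
  rewrite fj_eq //.
  have [kl ku] := kb j0.
  have G1 : 0 <= n0%:R * (j%:R * rho + 1 - (k j)%:R) :> R by apply: mulr_ge0; rewrite ?ler0n ?subr_ge0.
  have G2 : 0 <= j%:R * ((m0%:R - n0%:R * rho) - (p.1%:R - p.2%:R * rho)) :> R.
    by apply: mulr_ge0; rewrite ?subr_ge0.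
  nra.
rewrite /f (negbTE T) /=.
have H1 : 0 <= j%:R * (rho0 * p.2%:R - p.1%:R) :> R by apply: mulr_ge0; rewrite ?subr_ge0.
have H2 : 0 <= j%:R * p.2%:R * (rho - rho0) :> R.
  by apply: mulr_ge0; [apply: mulr_ge0; rewrite ?ler0n|rewrite subr_ge0 ltW].
have N0 : 0 <= n0%:R :> R by rewrite ler0n.
nra.
Qed.

Lemma Elow j sig : (0 < j)%N -> (rho - rho0)^-1 <= j%:R -> sig < rho ->
  - n0%:R <= (f j)%:R + (j * m0)%:R - (j * n0)%:R * sig :> R.
Proof.
move=> j0 T sr; rewrite fj_eq // !natrM.
have [kl ku] := kb j0.
have F1 : 0 <= n0%:R * ((k j)%:R - (j%:R * rho - 1)) :> R by apply: mulr_ge0; rewrite ?ler0n ?subr_ge0.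
have F2 : 0 <= j%:R * n0%:R * (rho - sig) :> R.
  by apply: mulr_ge0; [apply: mulr_ge0; rewrite ?ler0n|rewrite subr_ge0 ltW].
nra.
Qed.

Let x : R := q%:R.
Lemma x_gt1 : 1 < x. Proof. by rewrite /x ltr1n. Qed.
Lemma x_gt0 : 0 < x. Proof. by apply: lt_trans x_gt1. Qed.

Lemma xP n : (q ^ n)%:R = x `^ n%:R.
Proof. by rewrite natrX powR_mulrn // ltW // x_gt0. Qed.

Lemma term_eq sig j A B C : (q ^ A)%:R * (((q ^ j) ^ B)%:R * w sig ((q ^ j) ^ C)) =
  x `^ (A%:R + (j * B)%:R - (j * C)%:R * sig).
Proof.
rewrite /w -!expnM !xP -powRrM -!powRD' ?x_gt0 //.
by congr (_ `^ _); rewrite mulrN addrA.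
Qed.

Definition tt sig p j : R := (q ^ f j)%:R * (((q ^ j) ^ p.1)%:R * w sig ((q ^ j) ^ p.2)).

Lemma tt_ge0 sig p j : 0 <= tt sig p j.
Proof. by rewrite /tt; apply: mulr_ge0 => //; apply: mulr_ge0 => //; exact: w_ge0. Qed.

Lemma per_p p sig : p \in a -> rho < sig -> exists C, forall M,
  \sum_(j <- iota 1 M) (if p \in aj j then tt sig p j else 0) <= C.
Proof.
move=> pa rs.
case: (pselect (finite_set [set j : nat | (0 < j)%N /\ p \in aj j])) => [fin|inf].
  have [B HB] := fin_bound fin.
  set U := \sum_(i <- iota 0 B) tt sig p i.
  have U0 : 0 <= U by apply: sumr_ge0 => i _; exact: tt_ge0.
  have r01 : 0 < (2:R)^-1 < 1 by apply/andP; split; lra.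
  exists ((U * 2 ^+ B) / (1 - 2^-1)) => M; apply: geo_bound r01 _ _ => //.
    by apply: mulr_ge0 => //; apply: exprn_ge0.
  move=> j j0; case: ifP => pj; last first.
    by apply: mulr_ge0; [apply: mulr_ge0 => //; apply: exprn_ge0|apply: exprn_ge0; lra].
  have jB : (j < B)%N by apply: HB.
  apply: (@le_trans _ _ U).
    by apply: sum_ge_term; rewrite ?iota_uniq ?mem_iota ?add0n //; exact: tt_ge0.
  rewrite -mulrA -[X in X <= _]mulr1; apply: ler_wpM2l => //.
  rewrite exprVn ler_pdivlMr ?exprn_gt0 // mul1r; apply: ler_weXn2l; [lra|exact: ltnW].
have np : ~ prec rho p (m0, n0) by apply: Hmin.
have prc : p.1%:R - p.2%:R * rho <= m0%:R - n0%:R * rho.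
  by rewrite leNgt; apply/negP => H; apply: np; left.
set d := sig - rho.
have d0 : 0 < d by rewrite subr_gt0.
set r := x `^ (- d).
have r0 : 0 < r by apply: powR_gt0; exact: x_gt0.
have r1 : r < 1.
  rewrite lt_neqAle; apply/andP; split.
    rewrite powR_eq1 negb_or negb_or; apply/and3P; split.
    - by rewrite gt_eqF // x_gt1.
    - by rewrite -leNgt ltW // x_gt0.
    - by rewrite oppr_eq0 gt_eqF.
  by rewrite -(powRr0 x) /r; apply: ler_powR; [exact: ltW x_gt1|lra].
have r01 : 0 < r < 1 by rewrite r0 r1.
exists (x `^ n0%:R / (1 - r)) => M; apply: geo_bound r01 _ _ => //; first exact: powR_ge0.
move=> j j0; case: ifP => pj; last by apply: mulr_ge0; [exact: powR_ge0|apply: exprn_ge0; exact: ltW].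
rewrite /tt term_eq /r -powR_mulrn ?(ltW r0) // -powRrM -powRD' ?x_gt0 //.
apply: ler_powR; first exact: ltW x_gt1.
have := Eup j0 pa rs prc; rewrite -/d; lra.
Qed.

Lemma all_p sig s : rho < sig -> {subset s <= a} -> exists C, forall M,
  \sum_(p <- s) \sum_(j <- iota 1 M) (if p \in aj j then tt sig p j else 0) <= C.
Proof.
move=> rs; elim: s => [|p s IH] sub; first by exists 0 => M; rewrite big_nil.
have [C1 H1] := per_p (sub p (mem_head _ _)) rs.
have [C2 H2] : exists C, forall M, \sum_(p <- s) \sum_(j <- iota 1 M)
    (if p \in aj j then tt sig p j else 0) <= C.
  by apply: IH => i iS; apply: sub; rewrite in_cons iS orbT.
by exists (C1 + C2) => M; rewrite big_cons; apply: lerD.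
Qed.

Definition XX (sig : R) j := \sum_(p <- aj j) ((q ^ j) ^ p.1)%:R * w sig ((q ^ j) ^ p.2).

Lemma total_bound sig : rho < sig -> exists C, forall M,
  \sum_(j <- iota 1 M) (q ^ f j)%:R * XX sig j <= C.
Proof.
move=> rs; have [C HC] := all_p (s := a) rs (fun p pa => pa).
exists C => M; apply: le_trans (HC M); rewrite exchange_big /=.
rewrite le_eqVlt; apply/orP; left; apply/eqP; apply: eq_big_seq => j.
rewrite mem_iota => /andP[j0 _].
have [uj [_ sub]] := Haj j0.
rewrite /XX mulr_sumr -big_mkcond /= -[RHS]big_filter.
apply: perm_big; apply: uniq_perm => //; first by rewrite filter_uniq.
move=> p; rewrite mem_filter; case: (boolP (p \in aj j)) => //= /sub -> //.
Qed.

Lemma prod_expR (s : seq nat) (F : nat -> R) :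
  \prod_(i <- s) expR (F i) = expR (\sum_(i <- s) F i).
Proof.
elim: s => [|y s IH]; first by rewrite !big_nil expR0.
by rewrite !big_cons IH expRD.
Qed.

Lemma SM_c_bound sig : rho < sig -> exists C, forall M, SM sig M c <= expR C.
Proof.
move=> rs; have [C HC] := total_bound rs; exists C => M.
have -> : SM sig M c = SM sig M (dpartial FF M).
  rewrite /SM; apply: eq_big_seq => d; rewrite mem_iota add1n ltnS => /andP[d0 dM].
  rewrite (@c_eq M d) // d0 /= (leq_ltn_trans dM) //.
  by rewrite (leq_trans (ltn_expl _ Hq)) // leq_pexp2l ?q0.
rewrite dpartial_BP; apply: le_trans (SM_bp sig (iota 1 M) M FF_ge0) _.
apply: (@le_trans _ _ (\prod_(j <- iota 1 M) expR ((q ^ f j)%:R * XX sig j))).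
  apply: ler_prod => j _; rewrite SM_ge0 ?FF_ge0 //=.
  apply: le_trans (SM_pow sig _ M (G_ge0 j)) _.
  rewrite expRM_natl; apply: lerXn2r.
  - by rewrite nnegrE; apply: SM_ge0; exact: G_ge0.
  - by rewrite nnegrE expR_ge0.
  apply: le_trans (SM_opx sig _ _ M) _; exact: expR_ge1Dx.
  exact: FF_ge0.
by rewrite prod_expR ler_expR.
Qed.

Lemma series_eq sig M :
  series (fun n : nat => c n.+1 * ((n.+1)%:R `^ (- sig))) M = SM sig M c.
Proof.
rewrite seriesEnat /= /index_iota subn0 /SM.
have -> : iota 1 M = map (addn 1) (iota 0 M) by rewrite -iotaDl.
by rewrite big_map.
Qed.

Lemma conv sig : rho < sig -> dconverges c sig.
Proof.
move=> rs; rewrite /dconverges; have [C HC] := SM_c_bound rs.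
apply: nondecreasing_is_cvgn.
  rewrite seriesEnat; apply: nondecreasing_series => n _ _.
  by apply: mulr_ge0; [exact: c_ge0|exact: powR_ge0].
by exists (expR C) => _ [M _ <-]; rewrite series_eq.
Qed.

Lemma div sig : sig < rho -> ~ dconverges c sig.
Proof.
move=> sr; rewrite /dconverges => /cvg_series_cvg_0 H0.
set eps := x `^ (- n0%:R).
have eps0 : 0 < eps by apply: powR_gt0; exact: x_gt0.
have [N0 _ HN0] := cvgr_dist_lt _ _ H0 eps eps0.
set T := (rho - rho0)^-1.
have T0 : 0 <= T by rewrite invr_ge0 subr_ge0 ltW.
have [j [[j0 jin] jB]] := inf_unbounded Hinf (maxn N0.+1 (Num.Def.archi_bound T)).
have jT : T <= j%:R.
  apply: ltW; apply: lt_le_trans (archi_boundP T0) _.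
  by rewrite ler_nat (leq_trans (leq_maxr _ _) jB).
have n00 : (0 < n0)%N := Ha2 Hm0.
set N := ((q ^ j) ^ n0)%N.
have jN : (j < N)%N by apply: leq_trans (ltn_expl _ Hq) (qpow_ge _ n00).
have N0' : (0 < N)%N by apply: leq_ltn_trans jN.
have Hle : (N0 <= N.-1)%N.
  rewrite -ltnS prednK //; apply: (leq_trans _ jN); rewrite ltnS; apply: ltnW.
  exact: leq_trans (leq_maxl _ _) jB.
have := HN0 _ Hle; rewrite /= prednK //.
rewrite sub0r normrN; apply/negP; rewrite -leNgt.
apply: le_trans (ler_norm _).
apply: (@le_trans _ _ ((q ^ f j)%:R * ((q ^ j) ^ m0)%:R * w sig N)).
  rewrite -mulrA term_eq; apply: ler_powR; first exact: ltW x_gt1.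
  exact: Elow.
by apply: ler_wpM2r; [exact: w_ge0|exact: lb].
Qed.

Lemma abs_eq : abscissa c = rho%:E.
Proof.
apply/eqP; rewrite eq_le; apply/andP; split.
  apply/lee_addgt0Pr => e e0; apply: ereal_inf_lbound.
  exists (rho + e); last by rewrite EFinD.
  by apply: conv; rewrite ltrDl.
apply/ereal_infP => _ [s Hs <-]; rewrite lee_fin leNgt; apply/negP => sr.
exact: div sr Hs.
Qed.

End Main.

Section Order.
Variable R : realType.

Lemma prec_irr (rho : R) x : ~ prec rho x x.
Proof. by case=> [H|[_ H]]; [rewrite ltxx in H|rewrite ltnn in H]. Qed.

Lemma prec_trans (rho : R) x y z : prec rho x y -> prec rho y z -> prec rho x z.
Proof.
case=> [H1|[E1 L1]] [H2|[E2 L2]].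
- by left; apply: lt_trans H1.
- by left; rewrite E2 in H1.
- by left; rewrite E1.
- by right; split; [rewrite E1 E2|apply: ltn_trans L2].
Qed.

Lemma prec_total (rho : R) x y : prec rho x y \/ x = y \/ prec rho y x.
Proof.
case: x => m n; case: y => m' n'; rewrite /prec /=.
case: (ltgtP (m%:R - n%:R * rho) (m'%:R - n'%:R * rho)) => H.
- by right; right; left.
- by left; left.
case: (ltngtP n n') => Hn.
- by left; right.
- by right; right; right.
right; left; subst n'; congr (_, _).
by apply/eqP; rewrite -(eqr_nat R); apply/eqP; move: H; lra.
Qed.
End Order.

Unset Implicit Arguments.

Theorem lemma5p2 (R : realType) (rho0 rho : R) (q : nat)
  (a : seq (nat * nat)) (aj : nat -> seq (nat * nat))
  (m0 n0 : nat) (k : nat -> nat) :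
  0 < rho0 -> rho0 < rho -> (2 <= q)%N ->
  uniq a ->
  (forall p, p \in a -> (0 < p.2)%N) ->
  (forall j, (0 < j)%N -> uniq (aj j) /\ aj j != [::] /\ {subset aj j <= a}) ->
  (forall p, p \in a -> p.1%:R / p.2%:R <= rho0) ->
  (m0, n0) \in a ->
  infinite_set [set j : nat | (0 < j)%N /\ (m0, n0) \in aj j] ->
  (forall p, p \in a ->
     infinite_set [set j : nat | (0 < j)%N /\ p \in aj j] ->
     ~ prec rho p (m0, n0)) ->
  (forall j, (0 < j)%N -> (0 < k j)%N /\
     `| (k j)%:R / j%:R - rho | <= 1 / j%:R) ->
  let f := fun j : nat =>
    if (rho - rho0)^-1 <= j%:R then (n0 * k j - m0 * j)%N else 0%N in
  ((forall x, x \in a -> ~ prec rho x x) /\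
   (forall x y z, x \in a -> y \in a -> z \in a ->
      prec rho x y -> prec rho y z -> prec rho x z) /\
   (forall x y, x \in a -> y \in a ->
      prec rho x y \/ x = y \/ prec rho y x))
  /\
  abscissa (dinfprod (fun j => dpow (one_plus_xi (aj j) (q ^ j)) (q ^ f j)))
    = rho%:E.
Proof.
move=> H1 H2 H3 H4 H5 H6 H7 H8 H9 H10 H11 f.
split.
  split; first by move=> x _; exact: prec_irr.
  split; first by move=> x y z _ _ _; exact: prec_trans.
  by move=> x y _ _; exact: prec_total.
exact: (abs_eq H2 H3 H4 H5 H6 H7 H8 H9 H10 H11).
Qed.
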